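(* Consider a radial three-phase grid with $n$ buses $b_1,\dots,b_n$ and $m$ lines, in which a subset of buses (indexed by $\mathcal{M}_b$) is monitored, a monitored bus $b_i$ providing its three phase-to-ground voltage phasors $\dot{\mathbf{V}}^{abc}_i$ and its three injected current phasors $\dot{\mathbf{I}}^{abc}_i$, and the buses indexed by $\mathcal{N}_b=\{1,\dots,n\}\setminus\mathcal{M}_b$ being non-monitored. Suppose that for every $i=1,2,\ldots,n$: (a) if $\rho(b_i)>1$, then $b_i$ has at most one adjacent non-monitored bus; (b) if $\rho(b_i)=1$ and $b_i$ is non-monitored, then $b_i$ is adjacent to a monitored bus. Then the grid is observable.
   Context: A radial grid is a grid whose underlying graph (buses as vertices, lines as edges) is a tree; $\rho(b_i)$ denotes the degree of bus $b_i$, i.e. the number of buses connected to $b_i$ by a line. Each bus $b_i$ has three-phase voltage $\dot{\mathbf{V}}^{abc}_i\in\mathbb{C}^3$. Each line between $b_i$ and $b_j$ is modeled by a known invertible $3\times 3$ complex series admittance matrix $Y_{ij}$ (and possibly known shunt admittance matrices), so that the injected current at bus $b_i$ is $\dot{\mathbf{I}}^{abc}_i=\sum_{j \text{ adjacent to } i} Y_{ij}(\dot{\mathbf{V}}^{abc}_i-\dot{\mathbf{V}}^{abc}_j)+Y^{sh}_i\dot{\mathbf{V}}^{abc}_i$; equivalently $\dot{\mathbf I}=Y\dot{\mathbf V}$ with $Y$ the known network admittance matrix. The state is $x\in\mathbb{R}^{6n}$, the stacked real and imaginary parts of all bus voltages; the (noise-free) measurement vector $z=Hx\in\mathbb{R}^{12d}$,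 $d=|\mathcal{M}_b|$, stacks the real and imaginary parts of $\dot{\mathbf{V}}^{abc}_i$ and $\dot{\mathbf{I}}^{abc}_i$ for $i\in\mathcal{M}_b$. The grid is called observable if, in this noise-free setting, the voltages at all buses are uniquely determined by the measurements, i.e. $Hx=Hx'$ implies $x=x'$. *)

(* Defs.v *)
From HB Require Import structures.
From mathcomp Require Import all_boot all_order all_algebra.
From mathcomp Require Import complex.
Set Implicit Arguments. Unset Strict Implicit. Unset Printing Implicit Defensive.
Import Order.TTheory GRing.Theory Num.Theory.
Local Open Scope ring_scope.

Definition simple_graph (n : nat) (adj : rel 'I_n) : Prop :=
  (forall i j, adj i j = adj j i) /\ (forall i, ~~ adj i i).

Definition lines (n : nat) (adj : rel 'I_n) : {set 'I_n * 'I_n} :=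
  [set p | adj p.1 p.2 && (p.1 < p.2)%N].

(* Radial grid: the underlying graph is a tree (connected, n-1 edges). *)
Definition is_tree (n : nat) (adj : rel 'I_n) : Prop :=
  simple_graph adj /\ (forall i j, connect adj i j) /\ #|lines adj| = n.-1.

Definition rho (n : nat) (adj : rel 'I_n) (i : 'I_n) : nat := #|[set j | adj i j]|.

Definition injected_current (R : rcfType) (n : nat) (adj : rel 'I_n)
  (Y : 'I_n -> 'I_n -> 'M[R[i]]_3) (Ysh : 'I_n -> 'M[R[i]]_3)
  (V : 'I_n -> 'cV[R[i]]_3) (i : 'I_n) : 'cV[R[i]]_3 :=
  \sum_(j | adj i j) Y i j *m (V i - V j) + Ysh i *m V i.

Definition observable (R : rcfType) (n : nat) (adj : rel 'I_n)
  (Y : 'I_n -> 'I_n -> 'M[R[i]]_3) (Ysh : 'I_n -> 'M[R[i]]_3) (M : {set 'I_n}) : Prop :=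
  forall V V' : 'I_n -> 'cV[R[i]]_3,
    (forall i, i \in M -> V i = V' i /\
        injected_current adj Y Ysh V i = injected_current adj Y Ysh V' i) ->
    forall i, V i = V' i.

(* Main.v *)
Require Import Defs.
From HB Require Import structures.
From mathcomp Require Import all_boot all_order all_algebra.
From mathcomp Require Import complex.
Import Order.TTheory GRing.Theory Num.Theory.
Local Open Scope ring_scope.

Theorem lemma1 (R : rcfType) (n : nat) (adj : rel 'I_n)
  (Y : 'I_n -> 'I_n -> 'M[R[i]]_3) (Ysh : 'I_n -> 'M[R[i]]_3) (M : {set 'I_n}) :
  (2 <= n)%N ->
  is_tree adj ->
  (forall i j, adj i j -> Y i j \in unitmx) ->
  (forall i, (1 < rho adj i)%N ->
     (#|[set j | adj i j & j \notin M]| <= 1)%N) ->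
  (forall i, rho adj i = 1%N -> i \notin M ->
     exists j, adj i j && (j \in M)) ->
  observable adj Y Ysh M.
Proof.
move=> n2 [[Hsym Hirr] [Hconn _]] Hunit Ha Hb V V' HM.
have claim : forall i, i \in M -> forall j, adj i j -> V j = V' j.
  move=> i iM j aij; case jM: (j \in M); first by case: (HM j jM).
  have [Vi Ci] := HM i iM.
  set S := [set j | adj i j & j \notin M].
  have jS : j \in S by rewrite inE aij jM.
  have cS : (#|S| <= 1)%N.
    case: (ltnP 1 (rho adj i)) => h; first exact: Ha.
    apply: leq_trans h; apply: subset_leq_card; apply/subsetP=> x.
    by rewrite !inE => /andP[].
  have S1 : S = [set j].
    by apply/eqP; rewrite eq_sym eqEcard sub1set jS cards1 cS.
  rewrite /injected_current Vi in Ci.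
  move/addIr: Ci => Ci.
  have H : \sum_(k | adj i k) Y i k *m (V' k - V k) = 0.
    have -> : \sum_(k | adj i k) Y i k *m (V' k - V k) =
      \sum_(k | adj i k) Y i k *m (V' i - V k) - \sum_(k | adj i k) Y i k *m (V' i - V' k).
      rewrite -sumrB; apply: eq_bigr => k _; rewrite -mulmxBr; congr (_ *m _).
      by rewrite opprB [RHS]addrC [RHS]addrA subrK.
    by rewrite Ci subrr.
  rewrite (bigID (fun k => k \in M)) /= big1 ?add0r in H; last first.
    move=> k /andP[_ kM]; by case: (HM k kM) => -> _; rewrite subrr mulmx0.
  have e : \sum_(k | adj i k && (k \notin M)) Y i k *m (V' k - V k) =
           \sum_(k in S) Y i k *m (V' k - V k).
    by apply: eq_bigl => k; rewrite inE.
  rewrite e S1 big_set1 in H.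
  have := mulKmx (Hunit i j aij) (V' j - V j).
  rewrite H mulmx0 => /eqP; rewrite eq_sym subr_eq0 => /eqP.
  by move=> ->.
move=> k; case kM: (k \in M); first by case: (HM k kM).
have rpos : (0 < rho adj k)%N.
  have [j jk] : exists j : 'I_n, j != k.
    case: k kM => k kn kM.
    case: (k =P 0)%N => [k0|k0].
      have h1 : (1 < n)%N by [].
      exists (Ordinal h1); apply/eqP => /(congr1 val) /=; rewrite k0.
      done.
    exists (Ordinal (leq_ltn_trans (leq0n 0) (leq_trans (isT : 0 < 2)%N n2))).
    by apply/eqP => /(congr1 val) /= h; apply: k0.
  move: (Hconn k j) => /connectP [p pth lst].
  case: p pth lst => [|x p] /=; first by move=> _ e; rewrite -e eqxx in jk.
  move=> /andP[akx _] _.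
  by rewrite /rho card_gt0; apply/set0Pn; exists x; rewrite inE.
have [j /andP[akj jM]] : exists j, adj k j && (j \in M).
  case: (ltnP 1 (rho adj k)) => h.
    case: (pickP (fun j => adj k j && (j \in M))) => [j hj|none]; first by exists j.
    suff : (1 < #|[set j | adj k j & j \notin M]|)%N by rewrite ltnNge Ha.
    have sub : [set j | adj k j] \subset [set j | adj k j & j \notin M].
      apply/subsetP=> x; rewrite !inE => akx; rewrite akx /=.
      by move: (none x); rewrite akx /= => ->.
    have le := subset_leq_card sub.
    move: h; rewrite /rho => h; exact: (leq_trans h le).
  apply: Hb; first by apply/eqP; rewrite eqn_leq h rpos.
  by rewrite kM.
by apply: (claim j jM); rewrite Hsym.
Qed.
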